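(* Let a system $u_{n+1,x}^j = F^j(x,n,u_{n,x}^j,u_n,u_{n+1})$, $j=1,\dots,N$, be the compatibility condition of the linear systems $$\Phi_{n+1}=U_n\Phi_n,\qquad \Phi_{n,x}=V_n\Phi_n,$$ where $U_n=(a_{ik,n})$ is an $m\times m$ upper triangular matrix and $V_n=(b_{ik,n})$ is an $m\times m$ lower triangular matrix, with entries functions of the dynamical variables. For $k\ge0$ define the lower triangular matrices $R^{(k)}_n$ by $R^{(0)}_n=\mathrm{Id}$ and $R^{(k+1)}_n=D_x(R^{(k)}_n)+R^{(k)}_nV_n$, so that $D_x^k\Phi_n=R^{(k)}_n\Phi_n$, and let $r^{(k)}_{m1,n}$ denote the entry of $R^{(k)}_n$ in the last row and first column. If $D_xa_{11,n}=0$ and $a_{11,n}=a_{mm,n}$, then $I=r^{(k)}_{m1,n}$ is an $n$-integral of the system, i.e. $D_nI=I$ by virtue of the system.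
   Context: The dynamical variables are $u^j_n,u^j_{n\pm1},\dots$ and $u^j_{n,x},u^j_{n,xx},\dots$, treated as independent; $D_n$ is the shift $D_ny(n)=y(n+1)$ and $D_x$ is the total $x$-derivative, with shifted quantities expressed through the system (and its converse form $u^j_{n-1,x}=G^j(x,n,u^j_{n,x},u_n,u_{n-1})$, assumed to exist). Being a compatibility condition means that the relations obtained by differentiating $\Phi_{n+1}=U_n\Phi_n$ in $x$ and shifting $\Phi_{n,x}=V_n\Phi_n$ in $n$ agree by virtue of the system, i.e. $D_xU_n=V_{n+1}U_n-U_nV_n$. A function $I$ of $x,n,u_n,u_{n,x},u_{n,xx},\dots$ is called an $n$-integral if $D_nI=I$ holds by virtue of the system. *)

(* Defs.v *)
From HB Require Import structures.
From mathcomp Require Import all_boot all_order all_algebra.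
Set Implicit Arguments. Unset Strict Implicit. Unset Printing Implicit Defensive.
Import Order.TTheory GRing.Theory Num.Theory.
Local Open Scope ring_scope.

(* Abstract differential-difference setting: A is the ring of functions of the
   dynamical variables, taken modulo the system (i.e. equalities hold "by
   virtue of the system"); Dx is the total x-derivative, Dn the shift. *)

Definition is_derivation (A : comUnitRingType) (Dx : A -> A) : Prop :=
  (forall a b, Dx (a + b) = Dx a + Dx b) /\
  (forall a b, Dx (a * b) = Dx a * b + a * Dx b).

Definition is_ring_endo (A : comUnitRingType) (Dn : A -> A) : Prop :=
  (forall a b, Dn (a + b) = Dn a + Dn b) /\
  (forall a b, Dn (a * b) = Dn a * Dn b) /\ Dn 1 = 1.

Definition upper_triangular (A : comUnitRingType) (m : nat) (M : 'M[A]_m) :=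
  forall i j : 'I_m, (j < i)%N -> M i j = 0.

Definition lower_triangular (A : comUnitRingType) (m : nat) (M : 'M[A]_m) :=
  forall i j : 'I_m, (i < j)%N -> M i j = 0.

Fixpoint Rmat (A : comUnitRingType) (m : nat) (Dx : A -> A) (V : 'M[A]_m)
    (k : nat) : 'M[A]_m :=
  match k with
  | 0 => 1%:M
  | k.+1 => map_mx Dx (Rmat Dx V k) + Rmat Dx V k *m V
  end.

(* Main.v *)
Require Import Defs.
From HB Require Import structures.
From mathcomp Require Import all_boot all_order all_algebra.
Import GRing.Theory.
Local Open Scope ring_scope.

Section Aux.
Variables (A : comUnitRingType) (Dx Dn : A -> A) (n : nat).
Hypothesis dX : is_derivation Dx.
Hypothesis dN : is_ring_endo Dn.

Lemma Dx0 : Dx 0 = 0.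
Proof.
have h := (proj1 dX) 0 0; rewrite addr0 in h.
by apply: (@addrI _ (Dx 0)); rewrite addr0 -h.
Qed.

Lemma Dn0 : Dn 0 = 0.
Proof.
have h := (proj1 dN) 0 0; rewrite addr0 in h.
by apply: (@addrI _ (Dn 0)); rewrite addr0 -h.
Qed.

Lemma DxN a : Dx (- a) = - Dx a.
Proof.
apply/eqP; rewrite -subr_eq0 opprK -(proj1 dX) addNr Dx0 //.
Qed.

Lemma mapDxD (M N : 'M[A]_n) : map_mx Dx (M + N) = map_mx Dx M + map_mx Dx N.
Proof. by apply/matrixP => i j; rewrite !mxE (proj1 dX). Qed.

Lemma mapDnD (M N : 'M[A]_n) : map_mx Dn (M + N) = map_mx Dn M + map_mx Dn N.
Proof. by apply/matrixP => i j; rewrite !mxE (proj1 dN). Qed.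

Lemma mapDxN (M : 'M[A]_n) : map_mx Dx (- M) = - map_mx Dx M.
Proof. by apply/matrixP => i j; rewrite !mxE DxN. Qed.

Lemma mapDxM (M N : 'M[A]_n) :
  map_mx Dx (M *m N) = map_mx Dx M *m N + M *m map_mx Dx N.
Proof.
apply/matrixP => i j; rewrite !mxE.
rewrite (big_morph Dx (proj1 dX) Dx0) -big_split; apply: eq_bigr => l _.
by rewrite (proj2 dX) !mxE.
Qed.

Lemma mapDnM (M N : 'M[A]_n) :
  map_mx Dn (M *m N) = map_mx Dn M *m map_mx Dn N.
Proof.
apply/matrixP => i j; rewrite !mxE.
rewrite (big_morph Dn (proj1 dN) Dn0); apply: eq_bigr => l _.
by rewrite (proj1 (proj2 dN)) !mxE.
Qed.
End Aux.

(* Matrices are (m+1) x (m+1); last row = ord_max, first column = ord0. *)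
Theorem lemma5 (A : comUnitRingType) (Dx Dn : A -> A) (m : nat)
    (U V : 'M[A]_m.+1) (k : nat) :
  is_derivation Dx ->
  is_ring_endo Dn ->
  (forall a, Dn (Dx a) = Dx (Dn a)) ->
  upper_triangular U -> lower_triangular V ->
  U \in unitmx ->
  (* compatibility condition: D_x U_n = V_{n+1} U_n - U_n V_n *)
  map_mx Dx U = map_mx Dn V *m U - U *m V ->
  Dx (U ord0 ord0) = 0 ->
  U ord0 ord0 = U ord_max ord_max ->
  Dn (Rmat Dx V k ord_max ord0) = Rmat Dx V k ord_max ord0.
Proof.
move=> dX dN comm upU loV Uunit compat Da a0m.
set a := U ord0 ord0.
have step : forall j, map_mx Dn (Rmat Dx V j.+1) *m U =
   map_mx Dx (map_mx Dn (Rmat Dx V j) *m U) + (map_mx Dn (Rmat Dx V j) *m U) *m V.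
  move=> j /=; set S := map_mx Dn (Rmat Dx V j).
  have -> : map_mx Dn (map_mx Dx (Rmat Dx V j) + Rmat Dx V j *m V)
           = map_mx Dx S + S *m map_mx Dn V.
    rewrite mapDnD // mapDnM //; congr (_ + _).
    by apply/matrixP => p q; rewrite !mxE comm.
  rewrite mapDxM // compat mulmxBr !mulmxA mulmxDl.
  by rewrite addrA subrK.
have inv : forall j (c : 'I_m.+1),
    (map_mx Dn (Rmat Dx V j) *m U) ord_max c = a * Rmat Dx V j ord_max c.
  elim=> [|j IH] c.
    rewrite /= mxE (bigD1 ord_max) //= big1 ?addr0.
      rewrite !mxE eqxx /= (proj2 (proj2 dN)) mul1r /a a0m.
      case: (eqVneq (ord_max : 'I_m.+1) c) => [<-|ne]; first by rewrite mulr1.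
      rewrite mulr0; apply: upU.
      rewrite ltn_neqAle leq_ord andbT; apply/eqP => h; move: ne; rewrite (_ : c = ord_max) ?eqxx //; exact: val_inj.
    move=> l /negPf ne; rewrite !mxE eq_sym ne /= Dn0 ?mul0r //.
  rewrite step; move: (map_mx Dn (Rmat Dx V j) *m U) IH => M IH; rewrite !mxE IH /=.
  rewrite (proj2 dX) Da mul0r add0r mulrDr; congr (_ + _).
  rewrite big_distrr /=; apply: eq_bigr => l _; by rewrite IH mulrA.
have key := inv k ord0.
rewrite mxE (bigD1 ord0) //= big1 ?addr0 in key; last first.
  move=> l ne; rewrite upU ?mulr0 // lt0n; apply/eqP => h; move: ne; rewrite (_ : l = ord0) ?eqxx //; exact: val_inj.
rewrite mxE -/a mulrC in key.
have aU : a \is a GRing.unit.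
  move: Uunit; rewrite unitmxE -det_tr det_trig; last first.
    by apply/is_trig_mxP => i j lt; rewrite mxE upU.
  rewrite (bigD1 ord0) //= unitrM mxE => /andP[] //.
by apply: (mulrI aU).
Qed.
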